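(* Let $K\in\mathbb{N}_0$. For every $s=(s_1,\dots,s_K)\in\{-,+\}^K$ let $g_s:\mathbb{R}^K\times\mathbb{R}\to\mathbb{R}$ be a continuous function such that for all $(\beta,\gamma)\in\mathbb{R}^K\times\mathbb{R}$: (i) $g_s(\beta,\gamma)$ is strictly increasing in $\gamma$; (ii) for all $k\in\{1,\dots,K\}$, if $s_k=+$ then $g_s(\beta,\gamma)$ is strictly increasing in $\beta_k$; (iii) for all $k\in\{1,\dots,K\}$, if $s_k=-$ then $g_s(\beta,\gamma)$ is strictly decreasing in $\beta_k$. Then the system of $2^K$ equations in $K+1$ variables $g_s(\beta,\gamma)=0$ for all $s\in\{-,+\}^K$ has at most one solution $(\beta,\gamma)$. *)

(* Defs.v *)
From HB Require Import structures.
From mathcomp Require Import all_boot all_order all_algebra.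
From mathcomp Require Import all_classical all_reals all_analysis.
Set Implicit Arguments. Unset Strict Implicit. Unset Printing Implicit Defensive.
Import Order.TTheory GRing.Theory Num.Theory.
Local Open Scope ring_scope.

Definition setcoord (R : realType) (K : nat) (beta : 'rV[R]_K) (k : 'I_K) (x : R)
  : 'rV[R]_K := \row_j (if j == k then x else beta 0 j).

(* Sign vectors s in {-,+}^K : true = +, false = -. *)
Definition signs (K : nat) := {ffun 'I_K -> bool}.

(* Main.v *)
Require Import Defs.
From HB Require Import structures.
From mathcomp Require Import all_boot all_order all_algebra.
From mathcomp Require Import all_classical all_reals all_analysis.
Import Order.TTheory GRing.Theory Num.Theory numFieldNormedType.Exports.
Local Open Scope ring_scope.

Section Aux.
Variables (R : realType) (K : nat) (g : signs K -> 'rV[R]_K * R -> R).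
Hypothesis Hinc : forall (s : signs K) (beta : 'rV[R]_K) (gamma : R) (k : 'I_K) (x y : R), s k = true -> x < y ->
      g s (setcoord beta k x, gamma) < g s (setcoord beta k y, gamma).
Hypothesis Hdec : forall (s : signs K) (beta : 'rV[R]_K) (gamma : R) (k : 'I_K) (x y : R), s k = false -> x < y ->
      g s (setcoord beta k y, gamma) < g s (setcoord beta k x, gamma).
Variables (b1 b2 : 'rV[R]_K) (c : R).

Definition sg : signs K := [ffun k => b1 0 k < b2 0 k].
Definition mid (n : nat) : 'rV[R]_K := \row_j (if (j < n)%N then b2 0 j else b1 0 j).
Definition f n := g sg (mid n, c).

Lemma mid0 : mid 0 = b1.
Proof. by apply/rowP => j; rewrite !mxE; case: j. Qed.

Lemma midK : mid K = b2.
Proof. by apply/rowP => j; rewrite !mxE ltn_ord. Qed.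

Lemma step n (hn : (n < K)%N) :
  f n <= f n.+1 /\ (b1 0 (Ordinal hn) != b2 0 (Ordinal hn) -> f n < f n.+1).
Proof.
set k := Ordinal hn.
have E1 : mid n = setcoord (mid n) k (b1 0 k).
  apply/rowP => j; rewrite /setcoord !mxE.
  case: eqP => [->|_] //=; by rewrite ltnn.
have E2 : mid n.+1 = setcoord (mid n) k (b2 0 k).
  apply/rowP => j; rewrite /setcoord !mxE.
  case: eqP => [->|/eqP hj] /=; first by rewrite ltnSn.
  rewrite ltnS leq_eqVlt.
  have -> : (nat_of_ord j == n) = false.
    by apply/negbTE; apply: contra hj => /eqP h; apply/eqP/val_inj.
  done.
rewrite /f E2.
case: (ltgtP (b1 0 k) (b2 0 k)) => h.
- have hs : sg k = true by rewrite /sg ffunE h.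
  have hab := Hinc sg (mid n) c k _ _ hs h; rewrite -E1 in hab; split => //; exact: ltW.
- have hs : sg k = false by rewrite /sg ffunE; apply/negbTE; rewrite -leNgt ltW.
  have hab := Hdec sg (mid n) c k _ _ hs h; rewrite -E1 in hab; split => //; exact: ltW.
- by rewrite -h -E1; split => //; rewrite eqxx.
Qed.

Lemma chain n p : (n <= p)%N -> (p <= K)%N -> f n <= f p.
Proof.
move=> hnp; elim: p hnp => [|p IH].
  by rewrite leqn0 => /eqP ->.
rewrite leq_eqVlt => /orP [/eqP -> //| hnp] hpK.
apply: le_trans (IH hnp (ltnW hpK)) _.
exact: (@step p hpK).1.
Qed.

End Aux.
Arguments f {R K}. Arguments sg {R K}. Arguments mid {R K}. Arguments chain {R K g}. Arguments step {R K g}. Arguments mid0 {R K}. Arguments midK {R K}.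

Lemma main_le (R : realType) (K : nat) (g : signs K -> 'rV[R]_K * R -> R) :
  (forall (s : signs K) (beta : 'rV[R]_K) (c1 c2 : R), c1 < c2 -> g s (beta, c1) < g s (beta, c2)) ->
  (forall (s : signs K) (beta : 'rV[R]_K) (gamma : R) (k : 'I_K) (x y : R), s k = true -> x < y ->
      g s (setcoord beta k x, gamma) < g s (setcoord beta k y, gamma)) ->
  (forall (s : signs K) (beta : 'rV[R]_K) (gamma : R) (k : 'I_K) (x y : R), s k = false -> x < y ->
      g s (setcoord beta k y, gamma) < g s (setcoord beta k x, gamma)) ->
  forall (b1 b2 : 'rV[R]_K) (c1 c2 : R), c1 <= c2 ->
    (forall s, g s (b1, c1) = 0) -> (forall s, g s (b2, c2) = 0) ->
    b1 = b2 /\ c1 = c2.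
Proof.
move=> Hg Hinc Hdec b1 b2 c1 c2 hc h1 h2.
have hK := chain Hinc Hdec b1 b2 c1 _ _ (leq0n K) (leqnn K).
rewrite /f mid0 midK h1 in hK.
have ec : c1 = c2.
  move: hc; rewrite le_eqVlt => /orP [/eqP //| hlt].
  have := Hg (sg b1 b2) b2 _ _ hlt; rewrite h2 => h.
  by have := le_lt_trans hK h; rewrite ltxx.
subst c2; split => //.
apply/rowP => j.
case: (eqVneq (b1 0 j) (b2 0 j)) => // hne; exfalso.
have hj := ltn_ord j.
have [_ hs] := step Hinc Hdec b1 b2 c1 _ hj.
have := hs; have -> : Ordinal hj = j by apply: val_inj.
move=> /(_ hne) hlt.
have a1 := chain Hinc Hdec b1 b2 c1 0 j (leq0n _) (ltnW hj).
have a2 := chain Hinc Hdec b1 b2 c1 j j.+1 (leqnSn _) hj.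
have a3 := chain Hinc Hdec b1 b2 c1 j.+1 K hj (leqnn K).
rewrite /f mid0 h1 in a1; rewrite /f midK h2 in a3.
have e0 : f g b1 b2 c1 j = 0.
  by apply/eqP; rewrite eq_le a1 andbT (le_trans (ltW hlt)).
have e1 : f g b1 b2 c1 j.+1 = 0.
  by apply/eqP; rewrite eq_le a3 /= (le_trans a1 (ltW hlt)).
by move: hlt; rewrite e0 e1 ltxx.
Qed.

Theorem lemma2 (R : realType) (K : nat) (g : signs K -> 'rV[R]_K * R -> R) :
  (forall s, continuous (g s)) ->
  (forall (s : signs K) (beta : 'rV[R]_K) (c1 c2 : R), c1 < c2 -> g s (beta, c1) < g s (beta, c2)) ->
  (forall (s : signs K) (beta : 'rV[R]_K) (gamma : R) (k : 'I_K) (x y : R), s k = true -> x < y ->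
      g s (setcoord beta k x, gamma) < g s (setcoord beta k y, gamma)) ->
  (forall (s : signs K) (beta : 'rV[R]_K) (gamma : R) (k : 'I_K) (x y : R), s k = false -> x < y ->
      g s (setcoord beta k y, gamma) < g s (setcoord beta k x, gamma)) ->
  forall (b1 b2 : 'rV[R]_K) (c1 c2 : R),
    (forall s, g s (b1, c1) = 0) -> (forall s, g s (b2, c2) = 0) ->
    b1 = b2 /\ c1 = c2.
Proof.
move=> _ Hg Hinc Hdec b1 b2 c1 c2 h1 h2.
case: (leP c1 c2) => hc; first exact: (main_le _ _ _ Hg Hinc Hdec _ _ _ _ hc h1 h2).
have [-> ->] := main_le _ _ _ Hg Hinc Hdec _ _ _ _ (ltW hc) h2 h1; by [].
Qed.
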